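(* Let $L\subset\mathbf{R}^n$ be an $n$-dimensional lattice and let $H$ be a lamina of $L$. Consider the family of parallel laminae $\{H+v: v\in L\}$, which partitions $L$ into parallel layers. Then every Delaunay polytope of $L$ lies between two neighboring hyperplanes of this family, and all its vertices lie on these two hyperplanes.
   Context: An empty sphere is a sphere with no lattice point in its interior; a Delaunay polytope of $L$ is the convex hull of all lattice points lying on an empty sphere, when this hull is $n$-dimensional; Delaunay polytopes form the Delaunay partition of $\mathbf{R}^n$. A hyperplane $H$ such that $H\cap L$ is an $(n-1)$-dimensional sub-lattice of $L$ is a lamina of $L$ if every $(n-1)$-dimensional Delaunay polytope of the lattice $L\cap H$ (within $H$) is a facet of a Delaunay polytope of $L$, i.e. $H$ is partitioned into facets of Delaunay polytopes of $L$. Two hyperplanes of the family $\{H+v:v\in L\}$ are neighboring if no hyperplane of the family lies strictly between them. *)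

(* Defs.v *)
From HB Require Import structures.
From mathcomp Require Import all_boot all_order all_algebra.
From mathcomp Require Import reals.
Set Implicit Arguments. Unset Strict Implicit. Unset Printing Implicit Defensive.
Import Order.TTheory GRing.Theory Num.Theory.
Local Open Scope ring_scope.

Section Defs.
Variables (R : realType) (n : nat).
Notation pt := 'rV[R]_n.

Definition dotv (u v : pt) : R := (u *m v^T) 0 0.

Definition lattice_of (B : 'M[R]_n) : pt -> Prop :=
  fun x => exists z : 'rV[int]_n, x = map_mx (fun k : int => k%:~R) z *m B.

Definition conv (S : pt -> Prop) : pt -> Prop :=
  fun x => exists (k : nat) (p : 'I_k -> pt) (w : 'I_k -> R),
    (forall i, S (p i)) /\ (forall i, 0 <= w i) /\
    \sum_(i < k) w i = 1 /\ x = \sum_(i < k) w i *: p i.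

Definition affdim_ge (S : pt -> Prop) (k : nat) : Prop :=
  exists p : 'I_k.+1 -> pt, (forall i, S (p i)) /\
    row_free (\matrix_(i < k) (p (lift ord0 i) - p ord0)).

Definition sphere_pts (S : pt -> Prop) (c : pt) (r : R) : pt -> Prop :=
  fun x => S x /\ dotv (x - c) (x - c) = r ^+ 2.

Definition empty_sphere (S : pt -> Prop) (c : pt) (r : R) : Prop :=
  0 <= r /\ forall x, S x -> r ^+ 2 <= dotv (x - c) (x - c).

(* P is a k-dimensional Delaunay polytope of the point set S, inside the
   ambient affine space E (the center of the empty sphere lies in E) *)
Definition delaunay_in (E S : pt -> Prop) (k : nat) (P : pt -> Prop) : Prop :=
  exists (c : pt) (r : R), E c /\ empty_sphere S c r /\
    affdim_ge (sphere_pts S c r) k /\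
    (forall x, P x <-> conv (sphere_pts S c r) x).

Definition hyperplane (a : pt) (b : R) : pt -> Prop := fun x => dotv a x = b.

Definition is_face (Q P : pt -> Prop) : Prop :=
  exists (a : pt) (b : R), a != 0 /\ (forall x, P x -> dotv a x <= b) /\
    (forall x, Q x <-> (P x /\ dotv a x = b)).

Definition is_facet (Q P : pt -> Prop) : Prop := is_face Q P /\ affdim_ge Q n.-1.

Definition lamina (B : 'M[R]_n) (a : pt) : Prop :=
  let L := lattice_of B in
  let H := hyperplane a 0 in
  a != 0 /\
  affdim_ge (fun x => L x /\ H x) n.-1 /\
  (forall Q, delaunay_in H (fun x => L x /\ H x) n.-1 Q ->
     exists P, delaunay_in (fun _ => True) L n P /\ is_facet Q P).

Definition vertex (P : pt -> Prop) (x : pt) : Prop :=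
  P x /\ forall y z (t : R), P y -> P z -> 0 < t < 1 ->
    x = t *: y + (1 - t) *: z -> y = z.

End Defs.

(* Main.v *)
Require Import Defs.
From HB Require Import structures.
From mathcomp Require Import all_boot all_order all_algebra.
From mathcomp Require Import reals lra ring zify.
From Stdlib Require Import Classical.
Set Implicit Arguments. Unset Strict Implicit. Unset Printing Implicit Defensive.
Import Order.TTheory GRing.Theory Num.Theory.
Local Open Scope ring_scope.

Section Lin.
Variables (R : realType) (n : nat).
Notation pt := 'rV[R]_n.
Implicit Types u v w : pt.

Lemma dotvE u v : dotv u v = \sum_j u 0 j * v 0 j.
Proof. by rewrite /dotv mxE; apply: eq_bigr => j _; rewrite mxE. Qed.

Lemma dotvC u v : dotv u v = dotv v u.
Proof. by rewrite !dotvE; apply: eq_bigr => j _; rewrite mulrC. Qed.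

Lemma dotvDl u v w : dotv (u + v) w = dotv u w + dotv v w.
Proof. by rewrite !dotvE -big_split; apply: eq_bigr => j _; rewrite mxE mulrDl. Qed.

Lemma dotvZl (k : R) u v : dotv (k *: u) v = k * dotv u v.
Proof. by rewrite !dotvE mulr_sumr; apply: eq_bigr => j _; rewrite mxE mulrA. Qed.

Lemma dotvNl u v : dotv (- u) v = - dotv u v.
Proof. by rewrite -scaleN1r dotvZl mulN1r. Qed.

Lemma dotvBl u v w : dotv (u - v) w = dotv u w - dotv v w.
Proof. by rewrite dotvDl dotvNl. Qed.

Lemma dotv0l v : dotv 0 v = 0.
Proof. by rewrite dotvE big1 // => j _; rewrite mxE mul0r. Qed.

Lemma dotvDr u v w : dotv w (u + v) = dotv w u + dotv w v.
Proof. by rewrite !(dotvC w) dotvDl. Qed.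
Lemma dotvZr (k : R) u v : dotv v (k *: u) = k * dotv v u.
Proof. by rewrite !(dotvC v) dotvZl. Qed.
Lemma dotvNr u v : dotv v (- u) = - dotv v u.
Proof. by rewrite !(dotvC v) dotvNl. Qed.
Lemma dotvBr u v w : dotv w (u - v) = dotv w u - dotv w v.
Proof. by rewrite !(dotvC w) dotvBl. Qed.
Lemma dotv0r v : dotv v 0 = 0.
Proof. by rewrite dotvC dotv0l. Qed.

Lemma dotv_suml k (F : 'I_k -> pt) v :
  dotv (\sum_(i < k) F i) v = \sum_(i < k) dotv (F i) v.
Proof.
elim/big_ind2: _ => //; first by rewrite dotv0l.
by move=> x1 x2 y1 y2 <- <-; rewrite dotvDl.
Qed.

Lemma dotv_ge0 v : 0 <= dotv v v.
Proof. by rewrite dotvE sumr_ge0 // => j _; rewrite -expr2 sqr_ge0. Qed.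

Lemma dotv_eq0 v : (dotv v v == 0) = (v == 0).
Proof.
apply/idP/idP; last by move/eqP->; rewrite dotv0l.
rewrite dotvE psumr_eq0 => [/allP H|j _]; last by rewrite -expr2 sqr_ge0.
apply/eqP/matrixP => i j; rewrite (ord1 i) mxE.
by have := H j (mem_index_enum _); rewrite -expr2 sqrf_eq0 => /eqP.
Qed.

Lemma dotv_le u v : 2 * dotv u v <= dotv u u + dotv v v.
Proof.
have := dotv_ge0 (u - v); rewrite !dotvBl !dotvBr (dotvC v u); lra.
Qed.

End Lin.

Section Lin2.
Variables (R : realType) (n : nat).
Notation pt := 'rV[R]_n.

Definition indep k (f : 'I_k -> pt) :=
  forall al : 'I_k -> R, \sum_i al i *: f i = 0 -> forall i, al i = 0.

Lemma not_free_ker m p (A : 'M[R]_(m, p)) :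
  ~~ row_free A -> exists2 x : 'rV_m, x != 0 & x *m A = 0.
Proof.
rewrite -kermx_eq0 => /matrix0Pn [i [j Hij]].
exists (row i (kermx A)).
  by apply: contraNneq Hij => /matrixP/(_ 0 j); rewrite [LHS]mxE => ->; rewrite mxE.
by rewrite -row_mul mulmx_ker row0.
Qed.

Lemma mulmx_rowfun k (x : 'rV[R]_k) (f : 'I_k -> pt) :
  x *m (\matrix_(i < k) f i) = \sum_i x 0 i *: f i.
Proof. by rewrite mulmx_sum_row; apply: eq_bigr => i _; rewrite rowK. Qed.

Lemma indepP k (f : 'I_k -> pt) : row_free (\matrix_(i < k) f i) <-> indep f.
Proof.
split.
  move=> Hf al Hs i.
  have := @row_free_inj _ 1 _ _ _ Hf (\row_j al j) 0.
  rewrite mul0mx mulmx_rowfun.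
  have -> : \sum_i0 (\row_j al j) 0 i0 *: f i0 = \sum_i0 al i0 *: f i0.
    by apply: eq_bigr => j _; rewrite mxE.
  by move=> /(_ Hs) /matrixP /(_ 0 i); rewrite !mxE.
move=> Hi; apply: contraT => /not_free_ker [x Hx0 Hx].
move: Hx; rewrite mulmx_rowfun => /Hi H.
have Ex : x = 0 by apply/matrixP => i j; rewrite (ord1 i) mxE; apply: H.
by move: Hx0; rewrite Ex eqxx.
Qed.

Lemma ker_exists k (g : 'I_k -> pt) : (k < n)%N ->
  exists2 d : pt, d != 0 & forall i, dotv d (g i) = 0.
Proof.
move=> Hk.
have : ~~ row_free (\matrix_(i < k) g i)^T.
  rewrite /row_free; apply/negP => /eqP E.
  by have := rank_leq_col (\matrix_(i < k) g i)^T; rewrite E leqNgt Hk.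
move=> /not_free_ker [x Hx0 Hx]; exists x => // i.
move/matrixP: Hx => /(_ 0 i); rewrite !mxE => <-.
by rewrite dotvE; apply: eq_bigr => j _; rewrite !mxE.
Qed.

Lemma full_orth (g : 'I_n -> pt) w : indep g ->
  (forall i, dotv (g i) w = 0) -> w = 0.
Proof.
move=> /indepP; rewrite row_free_unit => Hu Hw.
have H0 : (\matrix_(i < n) g i) *m w^T = 0.
  apply/matrixP => i j; rewrite (ord1 j) [RHS]mxE -(Hw i) dotvE mxE.
  by apply: eq_bigr => l _; rewrite !mxE.
have : w^T = 0 by rewrite -(mulKmx Hu w^T) H0 mulmx0.
by move/(congr1 trmx); rewrite trmxK trmx0.
Qed.

Definition ext k (f : 'I_k -> pt) (v : pt) : 'I_k.+1 -> pt :=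
  fun i => if unlift ord_max i is Some j then f j else v.

Lemma ext_max k f v : @ext k f v ord_max = v.
Proof. by rewrite /ext unlift_none. Qed.

Lemma ext_widen k f v (i : 'I_k) : @ext k f v (widen_ord (leqnSn k) i) = f i.
Proof.
have -> : widen_ord (leqnSn k) i = lift ord_max i by apply: val_inj; rewrite /= /bump leqNgt ltn_ord.
by rewrite /ext liftK.
Qed.

Lemma ext_cases k f v (P : pt -> Prop) :
  (forall i, P (f i)) -> P v -> forall i, P (@ext k f v i).
Proof. by move=> H1 H2 i; rewrite /ext; case: unliftP. Qed.

Lemma indep_ext k (f : 'I_k -> pt) v d :
  indep f -> (forall i, dotv d (f i) = 0) -> dotv d v != 0 -> indep (ext f v).
Proof.
move=> Hf Hd Hv al.
rewrite big_ord_recr /= ext_max.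
under eq_bigr do rewrite ext_widen.
move=> Hs.
have Hm : al ord_max = 0.
  move/(congr1 (dotv d)): Hs; rewrite dotvDr dotv0r.
  rewrite dotvC dotv_suml big1 ?add0r; last first.
    by move=> i _; rewrite dotvZl dotvC Hd mulr0.
  by rewrite dotvZr => /eqP; rewrite mulf_eq0 (negbTE Hv) orbF => /eqP.
move: Hs; rewrite Hm scale0r addr0 => /Hf H i.
case: (unliftP ord_max i) => [j ->|->] //.
have -> : lift ord_max j = widen_ord (leqnSn k) j.
  by apply: val_inj; rewrite /= /bump leqNgt ltn_ord.
exact: H.
Qed.



End Lin2.

Lemma lemC (R : realType) m (a : 'rV[R]_m.+1) (f : 'I_m -> 'rV[R]_m.+1) w : a != 0 ->
  indep f -> (forall i, dotv a (f i) = 0) -> (forall i, dotv w (f i) = 0) ->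
  w = (dotv w a / dotv a a) *: a.
Proof.
move=> Ha Hf Haf Hwf.
have Haa : dotv a a != 0 by rewrite dotv_eq0.
have Hi : indep (ext f a) by apply: (indep_ext Hf Haf).
apply/eqP; rewrite -subr_eq0; apply/eqP.
apply: (full_orth Hi) => i; rewrite /ext; case: unliftP => [j _|_].
  by rewrite dotvBr dotvZr !(dotvC (f j)) Hwf Haf mulr0 subr0.
by rewrite dotvBr dotvZr (dotvC a w) mulfVK // subrr.
Qed.

Section Conv.
Variables (R : realType) (n : nat).
Notation pt := 'rV[R]_n.

Lemma dotv_sumr k (F : 'I_k -> pt) v :
  dotv v (\sum_(i < k) F i) = \sum_(i < k) dotv v (F i).
Proof. by rewrite dotvC dotv_suml; apply: eq_bigr => i _; rewrite dotvC. Qed.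

Lemma conv_dot (S : pt -> Prop) (a : pt) l1 l2 x :
  (forall y, S y -> l1 <= dotv a y <= l2) -> conv S x -> l1 <= dotv a x <= l2.
Proof.
move=> HS [k [p [w [Hp [Hw [H1 ->]]]]]].
rewrite dotv_sumr.
under eq_bigr do rewrite dotvZr.
apply/andP; split.
  rewrite -[l1]mul1r -H1 mulr_suml; apply: ler_sum => i _.
  by rewrite ler_wpM2l //; case/andP: (HS _ (Hp i)).
rewrite -[l2]mul1r -H1 mulr_suml; apply: ler_sum => i _.
by rewrite ler_wpM2l //; case/andP: (HS _ (Hp i)).
Qed.

Lemma jensen k (w : 'I_k -> R) (q : 'I_k -> pt) :
  (forall i, 0 <= w i) -> \sum_i w i = 1 ->
  dotv (\sum_i w i *: q i) (\sum_i w i *: q i) <= \sum_i w i * dotv (q i) (q i).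
Proof.
move=> Hw H1; set y := \sum_i w i *: q i.
have H0 : 0 <= \sum_i w i * dotv (q i - y) (q i - y).
  by apply: sumr_ge0 => i _; rewrite mulr_ge0 // dotv_ge0.
have E : \sum_i w i * dotv (q i - y) (q i - y) =
   \sum_i w i * dotv (q i) (q i) - dotv y y.
  rewrite (eq_bigr (fun i => w i * dotv (q i) (q i) - 2 * (w i * dotv (q i) y)
      + w i * dotv y y)); last first.
    by move=> i _; rewrite dotvBl !dotvBr (dotvC y (q i)); ring.
  rewrite big_split sumrB /= -mulr_sumr -mulr_suml.
  have -> : \sum_i w i * dotv (q i) y = dotv y y.
    by rewrite {3}/y dotv_suml; apply: eq_bigr => i _; rewrite dotvZl.
  rewrite H1; ring.
lra.
Qed.

Lemma conv_ball (S : pt -> Prop) c rho x :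
  (forall y, S y -> dotv (y - c) (y - c) <= rho) -> conv S x ->
  dotv (x - c) (x - c) <= rho.
Proof.
move=> HS [k [p [w [Hp [Hw [H1 ->]]]]]].
have -> : \sum_i w i *: p i - c = \sum_i w i *: (p i - c).
  under [RHS]eq_bigr do rewrite scalerBr.
  by rewrite sumrB -scaler_suml H1 scale1r.
apply: le_trans (jensen _ Hw H1) _.
rewrite -[rho]mul1r -H1 mulr_suml; apply: ler_sum => i _.
by rewrite ler_wpM2l // HS.
Qed.

Lemma conv_single (S : pt -> Prop) x : S x -> conv S x.
Proof.
move=> Hx; exists 1%N, (fun _ => x), (fun _ => 1); split => //; split => // .
by rewrite !big_ord1 scale1r.
Qed.

Lemma vertex_conv (S : pt -> Prop) (P : pt -> Prop) x :
  (forall y, conv S y -> P y) -> vertex P x -> conv S x -> S x.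
Proof.
move=> HSP [Px Hx] [k [p [w [Hp [Hw [H1 Ex]]]]]].
elim: k p w Hp Hw H1 Ex => [|k IH] p w Hp Hw H1 Ex.
  by move: H1; rewrite big_ord0 => /eqP; rewrite eq_sym oner_eq0.
move: H1 Ex; rewrite !big_ord_recl => H1 Ex.
set W := \sum_(i < k) w (lift ord0 i) in H1.
have HW : 0 <= W by apply: sumr_ge0 => i _.
have Hw0 := Hw ord0.
have [W0|WP] := eqVneq W 0.
  have Hz : forall i, w (lift ord0 i) = 0.
    move=> i; move/eqP: W0; rewrite psumr_eq0 // => /allP /(_ i (mem_index_enum _)).
    by move/eqP.
  rewrite big1 ?addr0 in Ex; last by move=> i _; rewrite Hz scale0r.
  by rewrite Ex (_ : w ord0 = 1) ?scale1r //; move: H1; rewrite W0 addr0.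
have [w00|wP] := eqVneq (w ord0) 0.
  apply: (IH (fun i => p (lift ord0 i)) (fun i => w (lift ord0 i))) => //.
    by move: H1; rewrite w00 add0r.
  by rewrite Ex w00 scale0r add0r.
have Wpos : 0 < W by rewrite lt_def WP HW.
have w0pos : 0 < w ord0 by rewrite lt_def wP Hw0.
set y := \sum_(i < k) (w (lift ord0 i) / W) *: p (lift ord0 i).
have Cy : conv S y.
  exists k, (fun i => p (lift ord0 i)), (fun i => w (lift ord0 i) / W).
  split => //; split; first by move=> i; rewrite divr_ge0.
  by split => //; rewrite -mulr_suml divff.
have Exy : x = w ord0 *: p ord0 + (1 - w ord0) *: y.
  rewrite Ex; congr (_ + _); rewrite /y scaler_sumr; apply: eq_bigr => i _.
  rewrite scalerA; congr (_ *: _).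
  have -> : 1 - w ord0 = W by lra.
  by rewrite mulrC divfK.
have Hp0 := Hp ord0.
have : p ord0 = y.
  apply: (Hx _ _ (w ord0)) => //.
  - by apply: HSP; apply: conv_single.
  - by apply: HSP.
  - by apply/andP; split => //; lra.
move=> Ey; rewrite Exy -Ey -scalerDl.
have ->  : w ord0 + (1 - w ord0) = 1 by ring.
by rewrite scale1r.
Qed.

End Conv.

Lemma seq_min (T : eqType) (R : realType) (s : seq T) (P : T -> Prop) (g : T -> R) x0 :
  x0 \in s -> P x0 -> exists x, [/\ x \in s, P x & forall y, y \in s -> P y -> g x <= g y].
Proof.
elim: s x0 => [//|h t IH] x0.
rewrite in_cons => Hx0 HP.
have [Ht|Ht] := classic (exists x1, x1 \in t /\ P x1).
  case: Ht => x1 [Hx1 HP1]; case: (IH x1 Hx1 HP1) => x [Hx HPx Hmin].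
  case: (classic (P h)) => Ph.
    have [le|lt] := leP (g x) (g h).
      exists x; split => //; first by rewrite in_cons Hx orbT.
      by move=> y; rewrite in_cons => /orP [/eqP->|] //; apply: Hmin.
    exists h; split => //; first by rewrite in_cons eqxx.
    move=> y; rewrite in_cons => /orP [/eqP->|Hy Py] //.
    by apply: le_trans (ltW lt) (Hmin _ Hy Py).
  exists x; split => //; first by rewrite in_cons Hx orbT.
  by move=> y; rewrite in_cons => /orP [/eqP->|] //; apply: Hmin.
have Ph : P h.
  case/orP: Hx0 => [/eqP<-|Hx0] //; by case: Ht; exists x0.
exists h; split => //; first by rewrite in_cons eqxx.
move=> y; rewrite in_cons => /orP [/eqP->|Hy Py] //.
by case: Ht; exists y.
Qed.

Section Lat.
Variables (R : realType) (n : nat) (B : 'M[R]_n).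
Notation pt := 'rV[R]_n.
Notation L := (lattice_of B).

Lemma map_intrD (z1 z2 : 'rV[int]_n) :
  map_mx (fun k : int => k%:~R : R) (z1 + z2) =
  map_mx (fun k : int => k%:~R) z1 + map_mx (fun k : int => k%:~R) z2.
Proof. by apply/matrixP => i j; rewrite !mxE intrD. Qed.

Lemma map_intrN (z1 : 'rV[int]_n) :
  map_mx (fun k : int => k%:~R : R) (- z1) = - map_mx (fun k : int => k%:~R) z1.
Proof. by apply/matrixP => i j; rewrite !mxE intrN. Qed.

Lemma lat0 : L 0.
Proof.
exists 0; rewrite (_ : map_mx _ 0 = 0) ?mul0mx //.
by apply/matrixP => i j; rewrite !mxE.
Qed.

Lemma latD x y : L x -> L y -> L (x + y).
Proof. by move=> [z1 ->] [z2 ->]; exists (z1 + z2); rewrite map_intrD mulmxDl. Qed.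

Lemma latN x : L x -> L (- x).
Proof. by move=> [z1 ->]; exists (- z1); rewrite map_intrN mulNmx. Qed.

Lemma latB x y : L x -> L y -> L (x - y).
Proof. by move=> Hx Hy; apply: latD => //; apply: latN. Qed.

Hypothesis HB : B \in unitmx.

Lemma lat_fin (K : R) : exists s : seq pt,
  forall l, L l -> dotv l l <= K -> l \in s.
Proof.
pose C := invmx B.
pose c (j : 'I_n) : pt := (col j C)^T.
pose X := `|K| + \sum_j dotv (c j) (c j).
have X0 : 0 <= X by rewrite addr_ge0 // sumr_ge0 // => j _; apply: dotv_ge0.
pose N := Num.Def.archi_bound X.
have HN : X < N%:R by apply: archi_boundP.
pose phi (f : {ffun 'I_n -> 'I_(2 * N).+1}) : 'rV[int]_n :=
  \row_j ((f j : nat)%:Z - N%:Z).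
exists [seq map_mx (fun k : int => k%:~R) (phi f) *m B | f <- enum {ffun 'I_n -> 'I_(2 * N).+1}].
move=> l [z El] Hl.
have Hz : forall j, `|z 0 j|%R < N%:Z.
  move=> j.
  have Ezj : (z 0 j)%:~R = dotv l (c j) :> R.
    have : map_mx (fun k : int => k%:~R : R) z = l *m C by rewrite El mulmxK.
    move/matrixP => /(_ 0 j); rewrite mxE => ->.
    by rewrite dotvE mxE; apply: eq_bigr => i _; rewrite !mxE.
  have H1 := dotv_le l (c j).
  have H2 := dotv_le l (- c j).
  rewrite dotvNr dotvNl dotvNr opprK in H2.
  have Hcj : dotv (c j) (c j) <= \sum_j dotv (c j) (c j).
    by rewrite (bigD1 j) //= lerDl sumr_ge0 // => i _; apply: dotv_ge0.
  have HK : K <= `|K| by apply: ler_norm.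
  have Hb : `|(z 0 j)%:~R : R| < N%:R.
    rewrite Ezj ltr_norml; apply/andP; split; rewrite /X in HN; lra.
  by move: Hb; rewrite -intr_norm -[N%:R]/((N%:Z)%:~R : R) ltr_int.
pose f := [ffun j => inord (absz (z 0 j + N%:Z)%R) : 'I_(2 * N).+1].
have -> : l = map_mx (fun k : int => k%:~R) (phi f) *m B.
  rewrite El; congr (_ *m _); apply/matrixP => i j; rewrite !mxE (ord1 i) ffunE.
  have Hj := Hz j.
  rewrite inordK; last by lia.
  congr (_%:~R); lia.
by apply: map_f; rewrite mem_enum.
Qed.

Lemma min_step (S : pt -> Prop) u beta d eps l0 :
  (forall l, S l -> L l) ->
  (forall l, S l -> dotv u l + beta <= dotv l l) ->
  S l0 -> 0 < dotv d l0 + eps ->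
  exists s l1, [/\ 0 <= s, S l1, 0 < dotv d l1 + eps,
    (forall l, S l -> dotv (u + s *: d) l + (beta + s * eps) <= dotv l l) &
    dotv (u + s *: d) l1 + (beta + s * eps) = dotv l1 l1].
Proof.
move=> HSL Hf Hl0 He0.
pose rho l := (dotv l l - dotv u l - beta) / (dotv d l + eps).
pose s0 := rho l0.
pose w := u + s0 *: d.
pose K := dotv w w + 2 * (beta + s0 * eps).
have Hbound : forall l, 0 < dotv d l + eps -> rho l <= s0 -> dotv l l <= K.
  move=> l He Hr.
  have : dotv l l - dotv u l - beta <= s0 * (dotv d l + eps).
    by rewrite -ler_pdivrMr.
  have := dotv_le w l; rewrite /K /w dotvDl dotvZl; lra.
case: (lat_fin K) => sq Hsq.
have Hl0s : l0 \in sq by apply: Hsq; [apply: HSL | apply: Hbound; rewrite ?lexx].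
case: (seq_min rho (P := fun l => S l /\ 0 < dotv d l + eps) Hl0s (conj Hl0 He0))
  => l1 [Hl1s [Sl1 He1] Hmin].
have Hrho0 : forall l, S l -> 0 < dotv d l + eps -> 0 <= rho l.
  move=> l Sl He; rewrite /rho divr_ge0 ?(ltW He) //.
  have := Hf l Sl; lra.
exists (rho l1), l1; split => //.
- by apply: Hrho0.
- move=> l Sl; rewrite dotvDl dotvZl.
  have Hs := Hf l Sl.
  have Hr1 := Hrho0 l1 Sl1 He1.
  have [He|He] := lerP (dotv d l + eps) 0.
    have : rho l1 * (dotv d l + eps) <= 0 by rewrite mulr_ge0_le0.
    lra.
  have Hle : rho l1 <= rho l.
    have [Hr|Hr] := lerP (rho l) s0.
      by apply: Hmin => //; apply: Hsq; [apply: HSL | apply: Hbound].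
    by apply: le_trans (ltW Hr); apply: Hmin.
  have : rho l1 * (dotv d l + eps) <= dotv l l - dotv u l - beta.
    by rewrite -ler_pdivlMr.
  lra.
- rewrite dotvDl dotvZl.
  have Hne : dotv d l1 + eps != 0 by rewrite gt_eqF.
  have : rho l1 * (dotv d l1 + eps) = dotv l1 l1 - dotv u l1 - beta.
    by rewrite /rho divfK.
  rewrite mulrDr; lra.
Qed.

End Lat.

Section Grow.
Variables (R : realType) (m : nat) (B : 'M[R]_m.+1) (a : 'rV[R]_m.+1).
Notation pt := 'rV[R]_m.+1.
Notation L := (lattice_of B).
Hypothesis HB : B \in unitmx.
Hypothesis Ha : a != 0.
Definition Lam (l : pt) := L l /\ dotv a l = 0.
Hypothesis Hspan : affdim_ge Lam m.
Variables (z u0 : pt) (beta0 : R).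
Hypothesis Hz : dotv a z = 0.
Hypothesis Hu0 : dotv a u0 = 0.
Hypothesis Hf0 : forall l, Lam l -> dotv u0 l + beta0 <= dotv l l.

Definition Inv k := exists u beta s0 (f : 'I_k -> pt),
  [/\ dotv a u = 0, (forall l, Lam l -> dotv u l + beta <= dotv l l),
      Lam s0 /\ dotv u s0 + beta = dotv s0 s0,
      (forall i, Lam (s0 + f i) /\ dotv u (s0 + f i) + beta = dotv (s0 + f i) (s0 + f i))
      & indep f /\ dotv u0 z + beta0 <= dotv u z + beta].

Lemma LamL l : Lam l -> L l. Proof. by case. Qed.

Lemma Lam0 : Lam 0.
Proof. by split; [apply: lat0 | rewrite dotv0r]. Qed.

Lemma Inv0 : Inv 0.
Proof.
have He : 0 < dotv (0 : pt) 0 + 1 by rewrite dotv0l add0r ltr01.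
have [s [l1 [Hs Sl1 _ Hfe Ht]]] := min_step HB LamL Hf0 Lam0 He.
exists (u0 + s *: 0), (beta0 + s * 1), l1, (fun _ : 'I_0 => 0 : pt).
split => //.
- by rewrite dotvDr dotvZr dotv0r mulr0 addr0.
- by case => i Hi.
- split; first by move=> al _ [].
  rewrite scaler0 addr0 mulr1; have := Hs; lra.
Qed.

Lemma nonconst (d : pt) s0 : d != 0 -> dotv d a = 0 -> Lam s0 ->
  exists l, Lam l /\ dotv d (l - s0) != 0.
Proof.
move=> Hd0 Hda Hs0; apply: NNPP => Hn.
have Hc : forall l, Lam l -> dotv d l = dotv d s0.
  move=> l Hl; apply/eqP; rewrite -subr_eq0 -dotvBr; apply/negP => /negP Hne.
  by apply: Hn; exists l.
case: Hspan => p [Hp Hfree].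
move/indepP: Hfree => Hind.
have H : d = (dotv d a / dotv a a) *: a.
  apply: (lemC Ha Hind) => i.
  - by rewrite dotvBr (Hp _).2 (Hp _).2 subrr.
  - by rewrite dotvBr !Hc ?subrr.
by move: Hd0; rewrite H Hda mul0r scale0r eqxx.
Qed.

Lemma InvS k : (k < m)%N -> Inv k -> Inv k.+1.
Proof.
move=> Hk [u [beta [s0 [f [Hau Hfe [Ls0 Ts0] Hfi [Hind Hzi]]]]]].
have [d Hd0 Hdg] := ker_exists (ext f a) (Hk : (k.+1 < m.+1)%N).
have Hdf : forall i, dotv d (f i) = 0.
  by move=> i; have := Hdg (widen_ord (leqnSn k) i); rewrite ext_widen.
have Hda : dotv d a = 0 by have := Hdg ord_max; rewrite ext_max.
pose d' := if 0 <= dotv d (z - s0) then d else - d.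
have Hd'z : 0 <= dotv d' (z - s0).
  rewrite /d'; case: ifP => // /negbT; rewrite -ltNge dotvNl => H.
  by rewrite oppr_ge0 ltW.
have Hd'f : forall i, dotv d' (f i) = 0.
  by move=> i; rewrite /d'; case: ifP; rewrite ?dotvNl Hdf ?oppr0.
have Hd'a : dotv d' a = 0.
  by rewrite /d'; case: ifP; rewrite ?dotvNl Hda ?oppr0.
have [l [Hl Hln]] := nonconst Hd0 Hda Ls0.
have Hln' : dotv d' (l - s0) != 0.
  by rewrite /d'; case: ifP; rewrite ?dotvNl ?oppr_eq0.
pose l' := if 0 < dotv d' (l - s0) then l else s0 + s0 - l.
have Hl' : Lam l'.
  rewrite /l'; case: ifP => // _; case: Hl => Hl1 Hl2; case: Ls0 => Hs1 Hs2; split.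
    by apply: latB => //; apply: latD.
  by rewrite dotvBr dotvDr Hl2 Hs2 !addr0 subr0.
have He' : 0 < dotv d' l' + - dotv d' s0.
  rewrite -dotvBr /l'; case: ifP => // /negbT; rewrite -leNgt => H.
  have -> : s0 + s0 - l - s0 = - (l - s0) by rewrite opprB addrAC addrK.
  by rewrite dotvNr oppr_gt0 lt_def H andbT eq_sym.
have [s [l1 [Hs Sl1 He1 Hfe' Ht1]]] := min_step HB LamL Hfe Hl' He'.
exists (u + s *: d'), (beta + s * - dotv d' s0), s0, (ext f (l1 - s0)).
have Htight : forall x, dotv d' (x - s0) = 0 -> dotv u x + beta = dotv x x ->
    dotv (u + s *: d') x + (beta + s * - dotv d' s0) = dotv x x.
  move=> x Hx Tx; rewrite dotvDl dotvZl -Tx; move: Hx; rewrite dotvBr.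
  rewrite (dotvC d' x); move=> Hx; rewrite mulrN; have : s * dotv x d' = s * dotv d' s0.
    by move/eqP: Hx; rewrite subr_eq0 => /eqP ->.
  lra.
split => //.
- by rewrite dotvDr dotvZr Hau (dotvC a d') Hd'a mulr0 addr0.
- by split => //; apply: Htight => //; rewrite subrr dotv0r.
- move=> i0; apply: (ext_cases (P := fun y => Lam (s0 + y) /\
      dotv (u + s *: d') (s0 + y) + (beta + s * - dotv d' s0) = dotv (s0 + y) (s0 + y))).
    move=> i; have [Li Ti] := Hfi i; split => //; apply: Htight => //.
    by rewrite addrC addKr Hd'f.
  by rewrite addrC subrK; split => //.
- split.
    apply: (indep_ext Hind Hd'f); rewrite dotvBr gt_eqF //; by [].
  rewrite dotvDl dotvZl.
  have : 0 <= s * dotv d' (z - s0) by rewrite mulr_ge0.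
  rewrite dotvBr mulrBr; lra.
Qed.

Lemma Inv_all k : (k <= m)%N -> Inv k.
Proof.
elim: k => [|k IH] Hk; first exact: Inv0.
by apply: InvS => //; apply: IH; apply: ltnW.
Qed.

End Grow.

Section Key.
Variables (R : realType) (m : nat) (B : 'M[R]_m.+1) (a : 'rV[R]_m.+1).
Notation pt := 'rV[R]_m.+1.
Notation L := (lattice_of B).
Hypothesis HB : B \in unitmx.
Hypothesis Hlam : lamina B a.

Lemma sq_expand (x c : pt) : dotv (x - c) (x - c) = dotv x x - 2 * dotv c x + dotv c c.
Proof. rewrite !dotvBl !dotvBr (dotvC x c); ring. Qed.

Lemma Kp (c : pt) (r : R) x y :
  (forall l, L l -> r ^+ 2 <= dotv (l - c) (l - c)) -> L x -> L y ->
  dotv (x - c) (x - c) = r ^+ 2 -> dotv (y - c) (y - c) = r ^+ 2 ->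
  dotv a x < 0 -> 0 < dotv a y -> False.
Proof.
move=> Hemp Lx Ly Sx Sy Hax Hay.
case: Hlam => Ha [Hspan Hlamina].
have Haa : dotv a a != 0 by rewrite dotv_eq0.
pose D := dotv a y - dotv a x.
have HD : 0 < D by rewrite /D; lra.
pose z := D^-1 *: (dotv a y *: x - dotv a x *: y).
have dotz : forall v, dotv v z = D^-1 * (dotv a y * dotv v x - dotv a x * dotv v y).
  by move=> v; rewrite /z dotvZr dotvBr !dotvZr.
have Hz : dotv a z = 0 by rewrite dotz (mulrC (dotv a y)) subrr mulr0.
pose mu := 2 * dotv c a / dotv a a.
pose u0 := 2 *: c - mu *: a.
pose beta0 := r ^+ 2 - dotv c c.
have Hu0 : dotv a u0 = 0.
  by rewrite /u0 dotvBr !dotvZr /mu (dotvC a c) mulfVK // subrr.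
have Hu0H : forall l, dotv a l = 0 -> dotv u0 l = 2 * dotv c l.
  by move=> l Hl; rewrite /u0 dotvBl !dotvZl Hl mulr0 subr0.
have Hf0 : forall l, Lam B a l -> dotv u0 l + beta0 <= dotv l l.
  move=> l [Ll Hl]; rewrite Hu0H // /beta0.
  have := Hemp l Ll; rewrite sq_expand; lra.
have [u [beta [s0 [f [Hau Hfe [Ls0 Ts0] Hfi [Hind Hzi]]]]]] :=
  Inv_all HB Ha Hspan z Hu0 Hf0 (leqnn m).
pose cQ := 2^-1 *: u.
have sqQ : forall x, dotv (x - cQ) (x - cQ) = dotv x x - dotv u x + dotv u u / 4.
  by move=> x0; rewrite sq_expand /cQ !dotvZl dotvZr; field.
pose rQ := Num.sqrt (dotv (s0 - cQ) (s0 - cQ)).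
have rQ2 : rQ ^+ 2 = beta + dotv u u / 4.
  rewrite /rQ sqr_sqrtr ?dotv_ge0 // sqQ; lra.
pose p : 'I_m.+1 -> pt := fun j => if unlift ord0 j is Some i then s0 + f i else s0.
have Hp : forall j, Lam B a (p j) /\ dotv u (p j) + beta = dotv (p j) (p j).
  by move=> j; rewrite /p; case: unliftP => [i _|_] //; apply: Hfi.
pose Q := conv (sphere_pts (Lam B a) cQ rQ).
have Hsph : forall q, Lam B a q -> dotv u q + beta = dotv q q ->
    sphere_pts (Lam B a) cQ rQ q.
  by move=> q Lq Tq; split => //; rewrite sqQ rQ2; lra.
have HQ : delaunay_in (hyperplane a 0) (fun x => L x /\ hyperplane a 0 x) m Q.
  exists cQ, rQ; split.
    by rewrite /hyperplane /cQ dotvZr Hau mulr0.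
  split.
    split; first by apply: sqrtr_ge0.
    move=> l Ll; rewrite rQ2 sqQ; have := Hfe l Ll; lra.
  split; last by [].
  exists p; split; first by move=> j; have [Lj Tj] := Hp j; apply: Hsph.
  have E : forall j, p (lift ord0 j) - p ord0 = f j.
    by move=> j; rewrite /p liftK unlift_none addrC addKr.
  apply/indepP => al Hs i; apply: (Hind al) => //.
  by rewrite (eq_bigr (fun j => al j *: f j)) in Hs => // j _; rewrite E.
have [P' [[cP [rP [_ [[rP0 HempP] [_ HP'iff]]]]] [[a' [b [Ha'0 [HP'b HQiff]]]] _]]] := Hlamina Q HQ.
have onP : forall q, sphere_pts L cP rP q -> P' q.
  by move=> q Sq; apply/HP'iff; apply: conv_single.
have inP : forall q, Lam B a q -> dotv u q + beta = dotv q q ->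
    dotv (q - cP) (q - cP) = rP ^+ 2 /\ dotv a' q = b.
  move=> q Lq Tq.
  have [Pq Hq] : P' q /\ dotv a' q = b by apply/HQiff; apply: conv_single; apply: Hsph.
  split => //; apply/eqP; rewrite eq_le; apply/andP; split; last by apply: HempP; case: Lq.
  apply: (conv_ball (S := sphere_pts L cP rP)); last by apply/HP'iff.
  by move=> y0 [_ ->].
pose w := 2 *: cP - u.
pose gam := rP ^+ 2 - dotv cP cP - beta.
have Hwq : forall q, Lam B a q -> dotv u q + beta = dotv q q -> dotv w q + gam = 0.
  move=> q Lq Tq; have [Sq _] := inP q Lq Tq.
  move: Sq; rewrite sq_expand /w /gam dotvBl dotvZl; lra.
have Hwf : forall i, dotv w (f i) = 0.
  move=> i; have [Li Ti] := Hfi i.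
  have := Hwq _ Li Ti; have := Hwq _ Ls0 Ts0; rewrite dotvDr; lra.
have Haf : forall i, dotv a (f i) = 0.
  move=> i; have [[_ Li] _] := Hfi i; move: Li; rewrite dotvDr Ls0.2 add0r //.
have Ew := lemC Ha Hind Haf Hwf.
have Hwz : dotv w z = dotv w s0.
  by rewrite Ew !dotvZl Hz Ls0.2.
have Hgam : dotv w z + gam = 0 by rewrite Hwz; apply: Hwq.
pose g (t : pt) := (2 * dotv cP t + rP ^+ 2 - dotv cP cP) - (2 * dotv c t + r ^+ 2 - dotv c c).
have Hgz : 0 <= g z.
  move: Hgam Hzi; rewrite /g /w /gam /beta0 dotvBl dotvZl Hu0H //; lra.
have Hgx : forall t, L t -> dotv (t - c) (t - c) = r ^+ 2 ->
    g t = - (dotv (t - cP) (t - cP) - rP ^+ 2).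
  move=> t _ St; move: St; rewrite /g !sq_expand; lra.
have Hgle : forall t, L t -> dotv (t - c) (t - c) = r ^+ 2 -> g t <= 0.
  by move=> t Lt St; rewrite Hgx // oppr_le0 subr_ge0; apply: HempP.
have EgD : D * g z = dotv a y * g x - dotv a x * g y.
  rewrite /g !dotz /D; field; rewrite -/D gt_eqF //.
have gx0 : g x = 0 /\ g y = 0.
  have H1 := Hgle x Lx Sx; have H2 := Hgle y Ly Sy.
  have H3 : 0 <= D * g z by rewrite mulr_ge0 // ltW.
  have H4 : dotv a y * g x <= 0 by rewrite mulr_ge0_le0 // ltW.
  have H5 : - dotv a x * g y <= 0.
    by rewrite mulr_ge0_le0 // oppr_ge0 ltW.
  have H6 : dotv a y * g x = 0 by lra.
  have H7 : - dotv a x * g y = 0 by lra.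
  move/eqP: H6; rewrite mulf_eq0 gt_eqF //= => /eqP ->.
  move/eqP: H7; rewrite mulf_eq0 oppr_eq0 lt_eqF //= => /eqP ->. by [].
have onS : forall t, L t -> dotv (t - c) (t - c) = r ^+ 2 -> g t = 0 -> dotv a' t <= b.
  move=> t Lt St gt0; apply: HP'b; apply: onP; split => //.
  by move: gt0; rewrite Hgx //; lra.
have Ha'x := onS x Lx Sx gx0.1.
have Ha'y := onS y Ly Sy gx0.2.
have Ha'f : forall i, dotv a' (f i) = 0.
  move=> i; have [Li Ti] := Hfi i.
  have := (inP _ Li Ti).2; have := (inP _ Ls0 Ts0).2; rewrite dotvDr; lra.
have Ea' := lemC Ha Hind Haf Ha'f.
have Hb : b = 0.
  by rewrite -(inP _ Ls0 Ts0).2 Ea' dotvZl Ls0.2 mulr0.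
move: Ha'x Ha'y; rewrite Ea' !dotvZl Hb.
set k := dotv a' a / dotv a a => H1 H2.
have k0 : k = 0 by nra.
by move: Ha'0; rewrite Ea' -/k k0 scale0r eqxx.
Qed.

End Key.

Theorem mainTheorem2 (R : realType) (n : nat) (B : 'M[R]_n) (a : 'rV[R]_n) :
  B \in unitmx ->
  lamina B a ->
  forall P : 'rV[R]_n -> Prop,
    delaunay_in (fun _ => True) (lattice_of B) n P ->
    exists v1 v2 : 'rV[R]_n,
      lattice_of B v1 /\ lattice_of B v2 /\
      dotv a v1 < dotv a v2 /\
      (forall v, lattice_of B v -> ~ (dotv a v1 < dotv a v < dotv a v2)) /\
      (forall x, P x -> dotv a v1 <= dotv a x <= dotv a v2) /\
      (forall x, vertex P x -> dotv a x = dotv a v1 \/ dotv a x = dotv a v2).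
Proof.
case: n B a => [|m] B a HB Hlam P HP.
  by case: Hlam; rewrite (thinmx0 a) eqxx.
case: HP => c [r [_ [[r0 Hemp] [[p [Hp Hfree]] HPiff]]]].
set S := sphere_pts (lattice_of B) c r in Hp HPiff.
have K : forall x y v, S x -> S y -> lattice_of B v ->
    dotv a x < dotv a v -> dotv a v < dotv a y -> False.
  move=> x y v [Lx Sx] [Ly Sy] Lv H1 H2.
  apply: (Kp HB Hlam (c := c - v) (r := r) (x := x - v) (y := y - v)).
  - by move=> l Ll; have := Hemp (l + v) (latD Ll Lv); rewrite opprB addrA.
  - exact: latB.
  - exact: latB.
  - by rewrite opprB addrA subrK.
  - by rewrite opprB addrA subrK.
  - by rewrite dotvBr subr_lt0.
  - by rewrite dotvBr subr_gt0.
have [v1 [v2 [S1 S2 H12]]] : exists v1 v2, [/\ S v1, S v2 & dotv a v1 < dotv a v2].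
  move/indepP: Hfree => Hind.
  have [i Hi] : exists i, dotv a (p (lift ord0 i)) != dotv a (p ord0).
    apply: NNPP => Hn.
    have Ha0 : a = 0.
      apply: (full_orth Hind) => i; rewrite dotvC dotvBr; apply/eqP; rewrite subr_eq0.
      by apply: contraT => Hne; case: Hn; exists i.
    by case: Hlam => Ha _; move: Ha; rewrite Ha0 eqxx.
  case: (ltgtP (dotv a (p (lift ord0 i))) (dotv a (p ord0))) Hi => // Hlt _.
    by exists (p (lift ord0 i)), (p ord0); split.
  by exists (p ord0), (p (lift ord0 i)); split.
have Lv : forall v, S v -> lattice_of B v by move=> v [].
have Hlev : forall w, S w -> dotv a w = dotv a v1 \/ dotv a w = dotv a v2.
  move=> w Sw.
  have [Hw1|Hw1|->] := ltgtP (dotv a w) (dotv a v1); last by left.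
    by case: (K w v2 v1 Sw S2 (Lv _ S1) Hw1 H12).
  have [Hw2|Hw2|->] := ltgtP (dotv a w) (dotv a v2); last by right.
    by case: (K v1 v2 w S1 S2 (Lv _ Sw) Hw1 Hw2).
  by case: (K v1 w v2 S1 Sw (Lv _ S2) H12 Hw2).
exists v1, v2; split; first exact: Lv.
split; first exact: Lv.
split => //.
split.
  by move=> v Lvv /andP [H1 H2]; apply: (K v1 v2 v S1 S2 Lvv H1 H2).
split.
  move=> x /HPiff; apply: conv_dot => w Sw.
  by case: (Hlev w Sw) => ->; rewrite lexx ?ltW.
move=> x Hx; apply: Hlev.
apply: (vertex_conv (P := P)) => //.
  by move=> y /HPiff.
by apply/HPiff; case: Hx.
Qed.
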